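(* Let $T$ be a complete first-order theory in a countable language with an uncountable atomic model. (1) If $\theta(\mathbf z;\mathbf x)$ is extendible, then for any countable atomic model $M$ and any $\mathbf b\in M^{\lg(\mathbf z)}$, $\mathbf a\in M^{\lg(\mathbf x)}$ with $M\models\theta(\mathbf b,\mathbf a)$, there is $M_0\preceq M$ such that $\mathbf b\subseteq M_0$ and $\mathbf a\subseteq M\setminus M_0$. (2) If $\theta(\mathbf z;\mathbf x)$ is extendible and $\mathbf z'\subseteq\mathbf z$, $\mathbf x'\subseteq\mathbf x$, then the restriction $\theta\restriction_{\mathbf z';\mathbf x'}$ is extendible. (3) A complete formula $\theta(\mathbf z;\mathbf x)$ is extendible if and only if $\theta\restriction_{\mathbf z,x_i}$ is not pseudo-algebraic for every variable $x_i$ in $\mathbf x$.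
   Context: A complete formula is one isolating a complete type over $\emptyset$ (realized in an atomic set). For a complete formula $\theta(\mathbf w)$ and a subsequence $\mathbf v$ of $\mathbf w$, $\theta\restriction_{\mathbf v}$ denotes the complete formula equivalent to $\exists\mathbf u\,\theta(\mathbf v,\mathbf u)$, where $\mathbf u$ are the remaining variables. A complete formula $\theta(\mathbf z;\mathbf x)$ with the displayed partition of its free variables is extendible if there are countable atomic models $M\preceq N$ and tuples $\mathbf b\subseteq M$, $\mathbf a\subseteq N\setminus M$ (every coordinate of $\mathbf a$ outside $M$) with $N\models\theta(\mathbf b,\mathbf a)$. A complete formula $\phi(x,\mathbf a)$ in one variable $x$ is pseudo-algebraic if for some/any countable atomic $M$ containing $\mathbf a$ and any atomic $N\succeq M$ with $N\neq M$, $\phi(N,\mathbf a)=\phi(M,\mathbf a)$; a complete formula $\theta(\mathbf z,x_i)$ is called pseudo-algebraic (as a formula in $x_i$) if $\theta(\mathbf b,x_i)$ is pseudo-algebraic for a (any) $\mathbf b$ realizing $\theta\restriction_{\mathbf z}$. *)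

(* Defs.v *)
From mathcomp Require Import all_boot.

Set Implicit Arguments.
Unset Strict Implicit.
Unset Printing Implicit Defensive.

Section FOL.

(* A countable language: countably many function symbols (constants are
   0-ary function symbols) and relation symbols. *)
Variables (F R : countType).

Inductive term : Type :=
| Var of nat
| App of F & seq term.

Inductive formula : Type :=
| Eq of term & term
| Rel of R & seq term
| Neg of formula
| And of formula & formula
| Ex of nat & formula.

Record structure : Type := Structure {
  carrier :> Type;
  elt0 : carrier;
  funS : F -> seq carrier -> carrier;
  relS : R -> seq carrier -> Prop }.

Definition upd (M : Type) (v : nat -> M) (i : nat) (x : M) : nat -> M :=
  fun j => if j == i then x else v j.

Fixpoint eval (M : structure) (v : nat -> M) (t : term) : M :=
  match t with
  | Var i => v i
  | App f ts => funS f (map (eval v) ts)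
  end.

Fixpoint sat (M : structure) (v : nat -> M) (phi : formula) : Prop :=
  match phi with
  | Eq t1 t2 => eval v t1 = eval v t2
  | Rel r ts => relS r (map (eval v) ts)
  | Neg psi => ~ sat v psi
  | And psi chi => sat v psi /\ sat v chi
  | Ex i psi => exists x : M, sat (upd v i x) psi
  end.

Fixpoint tfree (i : nat) (t : term) : bool :=
  match t with
  | Var j => j == i
  | App _ ts => has (tfree i) ts
  end.

Fixpoint ffree (i : nat) (phi : formula) : bool :=
  match phi with
  | Eq t1 t2 => tfree i t1 || tfree i t2
  | Rel _ ts => has (tfree i) ts
  | Neg psi => ffree i psi
  | And psi chi => ffree i psi || ffree i chi
  | Ex j psi => (j != i) && ffree i psi
  end.

Definition closed_in (n : nat) (phi : formula) : Prop :=
  forall i, ffree i phi -> i < n.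

Definition sentence (phi : formula) : Prop := closed_in 0 phi.

Fixpoint trename (rho : nat -> nat) (t : term) : term :=
  match t with
  | Var j => Var (rho j)
  | App f ts => App f (map (trename rho) ts)
  end.

Fixpoint frename (rho : nat -> nat) (phi : formula) : formula :=
  match phi with
  | Eq t1 t2 => Eq (trename rho t1) (trename rho t2)
  | Rel r ts => Rel r (map (trename rho) ts)
  | Neg psi => Neg (frename rho psi)
  | And psi chi => And (frename rho psi) (frename rho chi)
  | Ex j psi => Ex (rho j) (frename rho psi)
  end.

Definition asg (M : structure) (n : nat) (a : 'I_n -> M) : nat -> M :=
  fun i => if (insub i : option 'I_n) is Some j then a j else elt0 M.

Definition satT (M : structure) (n : nat) (phi : formula) (a : 'I_n -> M) :=
  sat (asg a) phi.

Definition catT (M : Type) (k m : nat) (b : 'I_k -> M) (a : 'I_m -> M)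
  : 'I_(k + m) -> M :=
  fun i => match split i with inl j => b j | inr j => a j end.

(* Restriction: given theta(x_0..x_(n-1)) and an index map s : 'I_p -> 'I_n,
   restrict s theta is the formula
     exists y_0 .. y_(n-1), (/\_j  y_(s j) = x_j) /\ theta(y_0, ..., y_(n-1)),
   i.e. (for s strictly increasing) exists u theta(v, u) with v = (x_(s j))_j.
   Bound variables y_i are x_(p+i). *)
Definition restrict (n p : nat) (s : 'I_p -> 'I_n) (theta : formula) : formula :=
  foldr Ex
    (foldr And (frename (addn p) theta)
       [seq Eq (Var (p + s j)) (Var j) | j <- enum 'I_p])
    (iota p n).

(* strictly increasing index maps = subsequences *)
Definition subseq_map (p n : nat) (s : 'I_p -> 'I_n) : Prop :=
  forall i j : 'I_p, i < j -> s i < s j.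

Definition cat_map (k k' m m' : nat) (s1 : 'I_k' -> 'I_k) (s2 : 'I_m' -> 'I_m)
  : 'I_(k' + m') -> 'I_(k + m) :=
  fun i => match split i with
           | inl j => lshift m (s1 j)
           | inr j => rshift k (s2 j)
           end.

Definition zxi_map (k m : nat) (i : 'I_m) : 'I_(k + 1) -> 'I_(k + m) :=
  fun j => match split j with
           | inl j' => lshift m j'
           | inr _ => rshift k i
           end.

Variable T : formula -> Prop.

Definition model (M : structure) : Prop :=
  forall phi, T phi -> forall v : nat -> M, sat v phi.

Definition complete_theory : Prop :=
  (forall phi, T phi -> sentence phi) /\
  (exists M : structure, model M) /\
  (forall phi, sentence phi ->
     (forall (M : structure) (v : nat -> M), model M -> sat v phi) \/
     (forall (M : structure) (v : nat -> M), model M -> ~ sat v phi)).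

Definition countable (M : structure) : Prop :=
  exists f : M -> nat, injective f.

Definition complete_formula (n : nat) (phi : formula) : Prop :=
  closed_in n phi /\
  (exists (M : structure) (a : 'I_n -> M), model M /\ satT phi a) /\
  (forall psi, closed_in n psi ->
     (forall (M : structure) (a : 'I_n -> M), model M -> satT phi a -> satT psi a) \/
     (forall (M : structure) (a : 'I_n -> M), model M -> satT phi a -> ~ satT psi a)).

Definition atomic (M : structure) : Prop :=
  model M /\
  forall (n : nat) (a : 'I_n -> M),
    exists phi, complete_formula n phi /\ satT phi a.

(* h : M -> N is an elementary embedding (M is identified with an elementary
   substructure of N via h) *)
Definition elementary (M N : structure) (h : M -> N) : Prop :=
  forall (phi : formula) (v : nat -> M), sat v phi <-> sat (h \o v) phi.

(* theta(z;x), |z| = k, |x| = m, with z = x_0..x_(k-1), x = x_k..x_(k+m-1) *)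
Definition extendible (k m : nat) (theta : formula) : Prop :=
  exists (M N : structure) (h : M -> N),
    [/\ countable M, countable N, atomic M, atomic N & elementary h] /\
    exists (b : 'I_k -> M) (a : 'I_m -> N),
      (forall (j : 'I_m) (y : M), h y <> a j) /\
      satT theta (catT (h \o b) a).

(* theta(z, x), |z| = k, x a single variable (index k), is pseudo-algebraic
   in x: for (any) b realizing theta|z, theta(b, x) is pseudo-algebraic,
   i.e. for any countable atomic M containing b and any atomic N properly
   extending M, theta(N, b) = theta(M, b). *)
Definition pseudo_algebraic (k : nat) (theta : formula) : Prop :=
  forall (M : structure), countable M -> atomic M ->
  forall b : 'I_k -> M,
    (exists c : 'I_1 -> M, satT theta (catT b c)) ->
  forall (N : structure) (h : M -> N),
    atomic N -> elementary h -> (exists y : N, forall x : M, h x <> y) ->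
    forall c : 'I_1 -> N,
      satT theta (catT (h \o b) c) <->
      exists c0 : 'I_1 -> M, h \o c0 = c /\ satT theta (catT b c0).

End FOL.

(* Main.v *)
From HB Require Import structures.
Require Import Defs.
From mathcomp Require Import all_boot zify.
From Stdlib Require Import FunctionalExtensionality ClassicalEpsilon ProofIrrelevance Classical.
From Stdlib Require List.
Set Implicit Arguments.
Unset Strict Implicit.
Unset Printing Implicit Defensive.
Arguments Var {F} _.
Arguments Eq {F R} _ _.
Arguments Rel {F R} _ _.
Arguments Neg {F R} _.
Arguments And {F R} _ _.

Section Sem.
Variables (F R : countType).
Local Notation term := (term F).
Local Notation formula := (formula F R).
Local Notation structure := (structure F R).

Definition term_ind' (P : term -> Prop) (HV : forall i, P (Var i))
  (HA : forall f ts, List.Forall P ts -> P (App f ts)) : forall t, P t :=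
  fix IH t := match t return P t with
  | Var i => HV i
  | App f ts => HA f ts ((fix IHl (l : seq term) : List.Forall P l :=
       match l return List.Forall P l with
       | [::] => List.Forall_nil P
       | t :: l' => List.Forall_cons t (IH t) (IHl l') end) ts)
  end.

Lemma hasE_In (A : Type) (a : A -> bool) (s : seq A) :
  has a s -> exists x, List.In x s /\ a x.
Proof.
elim: s => //= x s IH /orP [H|H]; first by exists x; split=> //; left.
by case: (IH H) => y [H1 H2]; exists y; split=> //; right.
Qed.

Lemma In_has (A : Type) (a : A -> bool) (s : seq A) x :
  List.In x s -> a x -> has a s.
Proof.
elim: s => //= y s IH [<-|H] ax; first by rewrite ax.
by rewrite IH ?orbT.
Qed.

Lemma map_ext_In (A B : Type) (f g : A -> B) (s : seq A) :
  (forall x, List.In x s -> f x = g x) -> map f s = map g s.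
Proof.
elim: s => //= x s IH H; rewrite H; last by left.
by rewrite IH // => y Hy; apply: H; right.
Qed.

Lemma eval_ext (M : structure) (v w : nat -> M) t :
  (forall i, tfree i t -> v i = w i) -> eval v t = eval w t.
Proof.
elim/term_ind': t => [i|f ts IH] H /=; first by apply: H; rewrite /= eqxx.
congr (funS _ _); apply: map_ext_In => t Ht.
rewrite List.Forall_forall in IH; apply: IH => // i Hi.
by apply: H => /=; apply: In_has Ht Hi.
Qed.

Lemma sat_ext (M : structure) phi (v w : nat -> M) :
  (forall i, ffree i phi -> v i = w i) -> sat v phi <-> sat w phi.
Proof.
elim: phi v w => [t1 t2|r ts|p IH|p IHp q IHq|j p IH] v w H /=.
- rewrite (@eval_ext _ v w t1) ?(@eval_ext _ v w t2) //.
  + by move=> i Hi; apply: H; rewrite /= Hi orbT.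
  + by move=> i Hi; apply: H; rewrite /= Hi.
- rewrite (@map_ext_In _ _ (eval v) (eval w)) // => t Ht.
  by apply: eval_ext => i Hi; apply: H => /=; apply: In_has Ht Hi.
- by rewrite (IH v w H).
- rewrite (IHp v w) ?(IHq v w) //.
  + by move=> i Hi; apply: H; rewrite /= Hi orbT.
  + by move=> i Hi; apply: H; rewrite /= Hi.
- split=> -[x Hx]; exists x; move: Hx; apply IH => i Hi; rewrite /upd;
  case: eqP => // /eqP Hij; first [apply: H | apply: esym; apply: H]; rewrite /= Hi andbT eq_sym //.
Qed.

Lemma eval_rename (M : structure) (v : nat -> M) rho t :
  eval v (trename rho t) = eval (v \o rho) t.
Proof.
elim/term_ind': t => [i|f ts IH] //=.
congr (funS _ _); rewrite -map_comp; apply: map_ext_In => t Ht.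
by rewrite List.Forall_forall in IH; rewrite /= IH.
Qed.

Lemma sat_rename (M : structure) rho phi (v : nat -> M) :
  injective rho -> sat v (frename rho phi) <-> sat (v \o rho) phi.
Proof.
move=> inj; elim: phi v => [t1 t2|r ts|p IH|p IHp q IHq|j p IH] v /=.
- by rewrite !eval_rename.
- by rewrite -map_comp (@map_ext_In _ _ _ (eval (v \o rho))) // => t _ /=; rewrite eval_rename.
- by rewrite IH.
- by rewrite IHp IHq.
- have E x : (upd v (rho j) x) \o rho = upd (v \o rho) j x.
    by apply: functional_extensionality => i; rewrite /upd /= (inj_eq inj).
  by split=> -[x Hx]; exists x; move: Hx; rewrite IH E.
Qed.

Lemma tfree_rename rho (t : term) i :
  tfree i (trename rho t) -> exists j, i = rho j /\ tfree j t.
Proof.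
elim/term_ind': t => [k|f ts IH] /=; first by move/eqP=> <-; exists k; rewrite eqxx.
rewrite has_map => /hasE_In [t [Ht Hi]].
rewrite List.Forall_forall in IH; case: (IH t Ht Hi) => j [-> Hj].
by exists j; split=> //; apply: In_has Ht Hj.
Qed.

Lemma ffree_rename rho (phi : formula) i : injective rho ->
  ffree i (frename rho phi) -> exists j, i = rho j /\ ffree j phi.
Proof.
move=> inj; elim: phi i => [t1 t2|r ts|p IH|p IHp q IHq|j p IH] i /=.
- case/orP=> /tfree_rename [j [-> Hj]]; exists j; by rewrite Hj ?orbT.
- rewrite has_map => /hasE_In [t [Ht Hi]]; case: (tfree_rename Hi) => j [-> Hj].
  by exists j; split=> //; apply: In_has Ht Hj.
- exact: IH.
- case/orP=> [/IHp|/IHq] [j [-> Hj]]; exists j; by rewrite Hj ?orbT.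
- case/andP=> Hne /IH [j' [Ei Hj']]; exists j'; split=> //.
  rewrite Hj' andbT; apply: contraNneq Hne => ->; by rewrite Ei.
Qed.

Lemma tsbound (ts : seq term) : List.Forall (fun t => exists n, forall i, tfree i t -> i < n) ts ->
  exists n, forall i, has (tfree i) ts -> i < n.
Proof.
elim: ts => [|t ts IHts] IH /=; first by exists 0.
inversion IH as [|x y H1 H2]; subst.
case: H1 => n1 H1; case: (IHts H2) => n2 Hn2.
exists (maxn n1 n2) => i /orP [/H1|Hi]; first by move=> h; rewrite leq_max h.
by rewrite leq_max (Hn2 i) ?orbT.
Qed.

Lemma tbound (t : term) : exists n, forall i, tfree i t -> i < n.
Proof.
elim/term_ind': t => [k|f ts IH] /=; first by exists k.+1 => i /eqP ->.
exact: tsbound.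
Qed.

Lemma tsbound' (ts : seq term) : exists n, forall i, has (tfree i) ts -> i < n.
Proof.
apply: tsbound; elim: ts => // t ts IH; constructor => //; exact: tbound.
Qed.

Lemma fbound (phi : formula) : exists n, closed_in n phi.
Proof.
rewrite /closed_in; elim: phi => [t1 t2|r ts|p IH|p IHp q IHq|j p IH] /=.
- case: (tbound t1) => n1 H1; case: (tbound t2) => n2 H2; exists (maxn n1 n2) => i.
  by case/orP=> [/H1|/H2] h; rewrite leq_max h ?orbT.
- exact: tsbound'.
- exact: IH.
- case: IHp => n1 H1; case: IHq => n2 H2; exists (maxn n1 n2) => i.
  by case/orP=> [/H1|/H2] h; rewrite leq_max h ?orbT.
- case: IH => n H; exists n => i /andP [_ /H] //.
Qed.

Lemma sat_ext_imp (M : structure) phi (v w : nat -> M) :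
  (forall i, ffree i phi -> v i = w i) -> sat v phi -> sat w phi.
Proof. by move=> H; rewrite (sat_ext H). Qed.

Lemma In_map_inv (A B : Type) (f : A -> B) (s : seq A) y :
  List.In y (map f s) -> exists x, List.In x s /\ y = f x.
Proof.
elim: s => //= x s IH [<-|/IH [z [H1 H2]]]; first by exists x; split=> //; left.
by exists z; split=> //; right.
Qed.

Lemma In_map (A B : Type) (f : A -> B) (s : seq A) x :
  List.In x s -> List.In (f x) (map f s).
Proof. elim: s => //= y s IH [->|H]; [left|right; apply: IH] => //. Qed.

Lemma In_mem (T : eqType) (x : T) s : x \in s -> List.In x s.
Proof. elim: s => //= y s IH; rewrite in_cons => /orP [/eqP ->|/IH]; [by left|by right]. Qed.

Lemma In_enum n (j : 'I_n) : List.In j (enum 'I_n).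
Proof. by apply: In_mem; rewrite mem_enum. Qed.

Lemma asgE (M : structure) n (a : 'I_n -> M) (j : 'I_n) : asg a j = a j.
Proof. by rewrite /asg valK. Qed.

Lemma asg_lt (M : structure) n (a : 'I_n -> M) i (H : i < n) : asg a i = a (Ordinal H).
Proof. by rewrite -asgE. Qed.

Lemma asg_ge (M : structure) n (a : 'I_n -> M) i : n <= i -> asg a i = elt0 M.
Proof. by move=> H; rewrite /asg insubF // ltnNge H. Qed.

Lemma sat_exs (M : structure) p n (body : formula) (v : nat -> M) :
  sat v (foldr (@Ex F R) body (iota p n)) <->
  exists w, (forall i, (i < p) || (p + n <= i) -> w i = v i) /\ sat w body.
Proof.
elim: n p v => [|n IH] p v /=.
- split; first by move=> H; exists v.
  case=> w [Hw Hs]; have -> : v = w; last by [].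
  apply: functional_extensionality => i; rewrite Hw //; apply/orP; lia.
- split.
  + case=> x /IH [w [Hw Hs]]; exists w; split=> // i Hi.
    have Hip : i != p by apply/eqP; move/orP: Hi; lia.
    rewrite Hw; last by apply/orP; move/orP: Hi; lia.
    by rewrite /upd (negbTE Hip).
  + case=> w [Hw Hs]; exists (w p); apply/IH; exists w; split=> // i Hi; rewrite /upd.
    case: (i =P p) => [->|Hne] //; apply: Hw; apply/orP; move/orP: Hi; lia.
Qed.

Lemma ffree_exs p n body i :
  ffree i (foldr (@Ex F R) body (iota p n) : formula) -> ffree i body /\ ((i < p) || (p + n <= i)).
Proof.
elim: n p => [|n IH] p /=; first by move=> ->; split=> //; apply/orP; lia.
case/andP=> Hne /IH [H1 H2]; split=> //; move/eqP: Hne => Hne; apply/orP; move/orP: H2; lia.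
Qed.

Lemma sat_ands (M : structure) (base : formula) l (v : nat -> M) :
  sat v (foldr (@And F R) base l) <-> (forall phi, List.In phi l -> sat v phi) /\ sat v base.
Proof.
elim: l => [|phi l IH] /=; first by split=> [H|[]] //.
rewrite IH; split=> [[H1 [H2 H3]]|[H1 H2]]; split=> //.
- by move=> psi [<-|H]; [|apply: H2].
- by apply: H1; left.
- by split=> //; move=> psi H; apply: H1; right.
Qed.

Lemma ffree_ands base l i :
  ffree i (foldr (@And F R) base l : formula) -> ffree i base \/ exists phi, List.In phi l /\ ffree i phi.
Proof.
elim: l => [|phi l IH] /=; first by left.
case/orP=> [H|/IH [H|[psi [H1 H2]]]].
- by right; exists phi; split=> //; left.
- by left.
- by right; exists psi; split=> //; right.
Qed.

Lemma sat_restrict (M : structure) n p (s : 'I_p -> 'I_n) (th : formula) (v : nat -> M) :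
  closed_in n th ->
  sat v (restrict s th) <-> exists y : 'I_n -> M, (forall j : 'I_p, y (s j) = v j) /\ satT th y.
Proof.
move=> Hc; rewrite /restrict sat_exs; split.
- case=> w [Hw /sat_ands [Heq Hth]].
  exists (fun j : 'I_n => w (p + j)); split.
  + move=> j; have := Heq _ (In_map (fun j0 : 'I_p => Eq (Var (p + s j0)) (Var j0)) (In_enum j)).
    by rewrite /= => ->; apply: Hw; rewrite ltn_ord.
  + move/(sat_rename _ _ (@addnI p)): Hth; rewrite /satT; apply: sat_ext_imp => i /Hc Hi.
    by rewrite (asg_lt _ Hi).
- case=> y [Hy Hth].
  exists (fun i => if (p <= i) && (i < p + n) then asg y (i - p) else v i); split.
  + move=> i Hi; case: ifP => // /andP [H1 H2]; exfalso; move/orP: Hi; lia.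
  + apply/sat_ands; split.
    * move=> phi Hphi; case: (In_map_inv Hphi) => j [_ ->] /=.
      have -> : (p <= p + s j) && (p + s j < p + n) by rewrite leq_addr ltn_add2l ltn_ord.
      by rewrite ifF ?addKn ?asgE ?Hy //; apply/negbTE; rewrite negb_and -ltnNge ltn_ord.
    * apply/(sat_rename _ _ (@addnI p)); move: Hth; rewrite /satT; apply: sat_ext_imp => i /Hc Hi /=.
      by rewrite leq_addr ltn_add2l Hi addKn.
Qed.

Definition pb (s n : nat) (g : 'I_n -> 'I_s) (th : formula) : formula :=
  foldr (@Ex F R) (foldr (@And F R) (frename (addn s) th)
     [seq Eq (Var (s + i)) (Var (g i)) | i : 'I_n <- enum 'I_n]) (iota s n).

Lemma sat_pb (M : structure) s n (g : 'I_n -> 'I_s) (th : formula) (v : nat -> M) :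
  closed_in n th -> sat v (pb g th) <-> satT th (fun i : 'I_n => v (g i)).
Proof.
move=> Hc; rewrite /pb sat_exs; split.
- case=> w [Hw /sat_ands [Heq Hth]].
  move/(sat_rename _ _ (@addnI s)): Hth; rewrite /satT; apply: sat_ext_imp => i /Hc Hi.
  rewrite (asg_lt _ Hi) /=.
  have := Heq _ (In_map (fun j : 'I_n => Eq (Var (s + j)) (Var (g j))) (In_enum (Ordinal Hi))).
  by rewrite /= => ->; apply: Hw; rewrite ltn_ord.
- move=> Hth.
  exists (fun i => if (s <= i) && (i < s + n) then asg (fun j => v (g j)) (i - s) else v i); split.
  + move=> i Hi; case: ifP => // /andP [H1 H2]; exfalso; move/orP: Hi; lia.
  + apply/sat_ands; split.
    * move=> phi Hphi; case: (In_map_inv Hphi) => j [_ ->] /=.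
      have -> : (s <= s + j) && (s + j < s + n) by rewrite leq_addr ltn_add2l ltn_ord.
      by rewrite ifF ?addKn ?asgE //; apply/negbTE; rewrite negb_and -ltnNge ltn_ord.
    * apply/(sat_rename _ _ (@addnI s)); move: Hth; rewrite /satT; apply: sat_ext_imp => i /Hc Hi /=.
      by rewrite leq_addr ltn_add2l Hi addKn.
Qed.

Lemma closed_pb s n (g : 'I_n -> 'I_s) (th : formula) :
  closed_in n th -> closed_in s (pb g th).
Proof.
move=> Hc i /ffree_exs [/ffree_ands [H|[phi [Hphi H]]] Hi]; last case: (In_map_inv Hphi) H => j [_ ->] /= H.
- case: (ffree_rename (@addnI s) H) => j [Ej /Hc Hj]; exfalso; move/orP: Hi; lia.
- case/orP: H => /eqP Ei; first (exfalso; have := ltn_ord j; move/orP: Hi; lia).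
  by rewrite -Ei ltn_ord.
Qed.

Variable T : formula -> Prop.

Lemma elem_inj (M N : structure) (h : M -> N) : elementary h -> injective h.
Proof.
move=> He x y Hxy.
pose v := fun i : nat => if i == 0 then x else y.
have := (proj2 (He (Eq (Var 0) (Var 1)) v)); rewrite /= /v /=; apply; exact: Hxy.
Qed.

Lemma elem_comp (M N P : structure) (g : M -> N) (h : N -> P) :
  elementary g -> elementary h -> elementary (h \o g).
Proof. by move=> Hg Hh phi v; rewrite (Hg phi v) (Hh phi (g \o v)). Qed.

Lemma elem_id (M : structure) : elementary (@id M).
Proof. by []. Qed.

Lemma elem_satT (M N : structure) (h : M -> N) n (phi : formula) (a : 'I_n -> M) :
  elementary h -> closed_in n phi -> satT phi a <-> satT phi (h \o a).
Proof.
move=> He Hc; rewrite /satT He; apply: sat_ext => i /Hc Hi.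
by rewrite /= !(asg_lt _ Hi).
Qed.

Lemma elem_restrict (M N : structure) (h : M -> N) n p (s : 'I_p -> 'I_n) (th : formula)
  (a : 'I_p -> M) :
  elementary h -> closed_in n th ->
  satT (restrict s th) (h \o a) <-> satT (restrict s th) a.
Proof.
move=> He Hc; rewrite /satT [X in _ <-> X]He !sat_restrict //.
by split=> -[y [H1 H2]]; exists y; split=> // j; rewrite H1 /= !asgE.
Qed.

Lemma transfer n (chi psi : formula) (M N : structure) (c : 'I_n -> M) (d : 'I_n -> N) :
  complete_formula T n chi -> model T M -> model T N -> satT chi c -> satT chi d ->
  closed_in n psi -> satT psi c -> satT psi d.
Proof.
move=> [_ [_ Hdec]] HM HN Hc Hd Hpsi Hp.
case: (Hdec psi Hpsi) => H; first exact: H.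
by exfalso; apply: (H M c).
Qed.

Lemma atomic_pull (M N : structure) (h : M -> N) :
  elementary h -> atomic T N -> atomic T M.
Proof.
move=> He [HN HA]; split.
- by move=> phi Hphi v; apply/He; apply: HN.
- move=> n a; case: (HA n (h \o a)) => phi [Hphi Hs]; exists phi; split=> //.
  by rewrite (@elem_satT _ _ h _ phi a He (proj1 Hphi)).
Qed.

Lemma countable_pull (M N : structure) (h : M -> N) :
  injective h -> countable N -> countable M.
Proof. by move=> Hi [c Hc]; exists (c \o h); apply: inj_comp. Qed.

Lemma EXT (N M : structure) n (th : formula) (y' : 'I_n -> N) (y : 'I_n -> M) :
  complete_formula T n th -> countable N -> atomic T N -> model T M ->
  satT th y' -> satT th y ->
  exists f : N -> M, elementary f /\ forall j, f (y' j) = y j.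
Proof.
move=> Hth [code codeI] [HN HA] HM Hy' Hy.
pose E (j : nat) : N := epsilon (inhabits (elt0 N)) (fun x => code x = j).
have EK x : E (code x) = x.
  by apply: codeI; apply: (epsilon_spec (inhabits (elt0 N)) (fun x0 => code x0 = code x)); exists x.
pose E' j := if j < n then asg y' j else E (j - n).
pose Inv t (G : nat -> M) := exists chi, complete_formula T t chi /\
   satT chi (fun i : 'I_t => E' i) /\ satT chi (fun i : 'I_t => G i).
pose Fs := fix Fs t := match t with 0 => asg y | t'.+1 => if t' < n then Fs t' else
   upd (Fs t') t' (epsilon (inhabits (elt0 M)) (fun z => Inv t'.+1 (upd (Fs t') t' z))) end.
have FsS t : Fs t.+1 = if t < n then Fs t else
   upd (Fs t) t (epsilon (inhabits (elt0 M)) (fun z => Inv t.+1 (upd (Fs t) t z))) by [].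
have Fs_stab t d i : i < t -> Fs (t + d) i = Fs t i.
  move=> Hit; elim: d => [|d IH]; first by rewrite addn0.
  rewrite addnS FsS; case: ifP => // _; rewrite /upd ifF //; apply/eqP; lia.
have Fs_le t : t <= n -> Fs t = asg y.
  elim: t => [|t IH] Ht //; rewrite FsS ifT //; apply: IH; exact: ltnW.
have Inv_n : Inv n (Fs n).
  exists th; split=> //; split.
  - have -> : (fun i : 'I_n => E' i) = y'; last by [].
    by apply: functional_extensionality => i; rewrite /E' ltn_ord asgE.
  - by rewrite Fs_le //; have -> : (fun i : 'I_n => asg y i) = y;
      first by apply: functional_extensionality => i; rewrite asgE.
have Inv_step t : n <= t -> Inv t (Fs t) -> Inv t.+1 (Fs t.+1).
  move=> Hnt [chi [Hchi [H1 H2]]]; rewrite FsS ifF; last by apply/negbTE; rewrite -leqNgt.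
  apply: (epsilon_spec (inhabits (elt0 M)) (fun z => Inv t.+1 (upd (Fs t) t z))).
  case: (HA t.+1 (fun i : 'I_t.+1 => E' i)) => psi [Hpsi Hs].
  have Hcl : closed_in t (Ex t psi).
    move=> i /= /andP [Hne /(proj1 Hpsi) Hi]; move/eqP: Hne => Hne; lia.
  have HsN : satT (Ex t psi) (fun i : 'I_t => E' i).
    exists (E' t); move: Hs; rewrite /satT; apply: sat_ext_imp => i /(proj1 Hpsi) Hi.
    rewrite (asg_lt _ Hi) /= /upd; case: eqP => [->|/eqP Hne] //.
    have Hi' : i < t by lia.
    by rewrite (asg_lt _ Hi'); rewrite /E'.
  have := transfer Hchi HN HM H1 H2 Hcl HsN; case=> z Hz.
  exists z; exists psi; split=> //; split=> //.
  move: Hz; rewrite /satT; apply: sat_ext_imp => i /(proj1 Hpsi) Hi.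
  rewrite (asg_lt _ Hi) /= /upd; case: (i =P t) => // Hne.
  have Hi' : i < t by lia.
  by rewrite (asg_lt _ Hi').
have Inv_all t : n <= t -> Inv t (Fs t).
  elim: t => [|t IH] Ht; first by move: Ht; rewrite leqn0 => /eqP Hn; rewrite -Hn.
  case: (ltnP t n) => Htn.
  - have Hn : t.+1 = n by apply/eqP; rewrite eqn_leq Ht Htn.
    by rewrite Hn.
  - exact: Inv_step (IH Htn).
pose f x := Fs (n + code x).+1 (n + code x).
have Ff x t : n + code x < t -> Fs t (n + code x) = f x.
  move=> Ht; rewrite -(subnKC Ht) Fs_stab //.
have E'n x : E' (n + code x) = x.
  by rewrite /E' ifF ?addKn ?EK //; apply/negbTE; rewrite -leqNgt leq_addr.
exists f; split.
- move=> phi v; case: (fbound phi) => N0 HN0.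
  pose s := n + (\max_(i < N0) code (v i)).+1.
  have Hs (i : 'I_N0) : n + code (v i) < s.
    rewrite ltn_add2l ltnS; exact: (@leq_bigmax _ (fun i : 'I_N0 => code (v i)) i).
  pose g (i : 'I_N0) : 'I_s := Ordinal (Hs i).
  have key (P : structure) (w : 'I_s -> P) (u : nat -> P) :
      (forall i : 'I_N0, w (g i) = u i) -> (sat u phi <-> satT (pb g phi) w).
    move=> Hw; rewrite /satT sat_pb //.
    have -> : (fun i : 'I_N0 => asg w (g i)) = (fun i : 'I_N0 => u i).
      by apply: functional_extensionality => i; rewrite asgE Hw.
    rewrite /satT; apply: sat_ext => i /HN0 Hi; by rewrite (asg_lt _ Hi).
  have [chi [Hchi [H1 H2]]] := Inv_all s (leq_addr _ _).
  have Hcl : closed_in s (pb g phi) by apply: closed_pb.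
  rewrite (key N (fun i : 'I_s => E' i) v); last by move=> i; rewrite /= E'n.
  rewrite (key M (fun i : 'I_s => Fs s i) (f \o v)); last by move=> i; rewrite /= Ff.
  split; [exact: (transfer Hchi HN HM H1 H2 Hcl)|exact: (transfer Hchi HM HN H2 H1 Hcl)].
- move=> j; pose c := code (y' j); pose s := (n + c).+1.
  have Hcl : closed_in s (Eq (Var j) (Var (n + c)) : formula).
    move=> i Hi; case/orP: Hi => /eqP <- //; have := ltn_ord j; lia.
  have [chi [Hchi [H1 H2]]] := Inv_all s (leq_trans (leq_addr c n) (leqnSn _)).
  have HjS : j < s by have := ltn_ord j; lia.
  have HcS : n + c < s by [].
  have HsN : satT (Eq (Var j) (Var (n + c)) : formula) (fun i : 'I_s => E' i).
    rewrite /satT /= (asg_lt _ HjS) (asg_lt _ HcS) /= E'n /E' ltn_ord asgE //.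
  have Heq : Fs s j = Fs s (n + c).
    have H := transfer Hchi HN HM H1 H2 Hcl HsN.
    rewrite /satT /= (asg_lt _ HjS) (asg_lt _ HcS) in H; exact: H.
  rewrite -(Ff (y' j) s) // -/c -Heq.
  have -> : s = n + (s - n) by rewrite subnKC // /s; lia.
  by rewrite Fs_stab ?ltn_ord // Fs_le // asgE.
Qed.

Lemma catT_l (P : Type) k m (b : 'I_k -> P) (a : 'I_m -> P) j : catT b a (lshift m j) = b j.
Proof. by rewrite /catT (unsplitK (inl _ j)). Qed.

Lemma catT_r (P : Type) k m (b : 'I_k -> P) (a : 'I_m -> P) j : catT b a (rshift k j) = a j.
Proof. by rewrite /catT (unsplitK (inr _ j)). Qed.

Lemma catT_cat_map (P : Type) k m k' m' (s1 : 'I_k' -> 'I_k) (s2 : 'I_m' -> 'I_m)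
  (b : 'I_k -> P) (a : 'I_m -> P) j :
  catT b a (cat_map s1 s2 j) = catT (b \o s1) (a \o s2) j.
Proof.
rewrite -(splitK j); case: (split j) => j' /=.
- by rewrite /cat_map /= (unsplitK (inl _ j')) catT_l catT_l.
- by rewrite /cat_map /= (unsplitK (inr _ j')) catT_r catT_r.
Qed.

Lemma catT_zxi (P : Type) k m (i : 'I_m) (b : 'I_k -> P) (a : 'I_m -> P) j :
  catT b a (zxi_map i j) = catT b (fun _ : 'I_1 => a i) j.
Proof.
rewrite -(splitK j); case: (split j) => j' /=.
- by rewrite /zxi_map /= (unsplitK (inl _ j')) catT_l catT_l.
- by rewrite /zxi_map /= (unsplitK (inr _ j')) catT_r catT_r.
Qed.

Lemma upd_asg_catT (M : structure) k (b : 'I_k -> M) x (j : 'I_(k + 1)) :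
  upd (asg b) k x j = catT b (fun _ : 'I_1 => x) j.
Proof.
rewrite -(splitK j); case: (split j) => j' /=.
- by rewrite catT_l /upd ifF ?asgE //; apply/negbTE; rewrite neq_ltn ltn_ord.
- by rewrite catT_r /upd /= ord1 addn0 eqxx.
Qed.

Lemma restrict_ext (M : structure) n p (s : 'I_p -> 'I_n) (th : formula) (v w : nat -> M) :
  closed_in n th -> (forall j : 'I_p, v j = w j) ->
  sat v (restrict s th) -> sat w (restrict s th).
Proof.
move=> Hc Hvw; rewrite !sat_restrict //; case=> y [H1 H2]; exists y; split=> // j.
by rewrite H1.
Qed.

Lemma part1 k m (th : formula) :
  complete_formula T (k + m) th -> extendible T k m th ->
  forall (M : structure), countable M -> atomic T M ->
  forall (b : 'I_k -> M) (a : 'I_m -> M),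
    satT th (catT b a) ->
    exists (M0 : structure) (h : M0 -> M),
      elementary h /\ (forall j : 'I_k, exists y : M0, h y = b j) /\
      (forall (j : 'I_m) (y : M0), h y <> a j).
Proof.
move=> Hth [M1 [N1 [h1 [[cM1 cN1 aM1 aN1 eh1] [b' [a' [Ha' Hs]]]]]]] M cM aM b a Hba.
have [f [ef Hf]] := EXT Hth cN1 aN1 (proj1 aM) Hs Hba.
exists M1, (f \o h1); split; first exact: elem_comp.
split.
- move=> j; exists (b' j); have := Hf (lshift m j); by rewrite !catT_l.
- move=> j y /= Hy; apply: (Ha' j y); apply: (elem_inj ef).
  by rewrite Hy; have := Hf (rshift k j); rewrite !catT_r.
Qed.

Lemma part2 k m k' m' (th : formula) (s1 : 'I_k' -> 'I_k) (s2 : 'I_m' -> 'I_m) :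
  complete_formula T (k + m) th -> extendible T k m th ->
  extendible T k' m' (restrict (cat_map s1 s2) th).
Proof.
move=> Hth [M [N [h [[cM cN aM aN eh] [b [a [Ha Hs]]]]]]].
exists M, N, h; split=> //; exists (b \o s1), (a \o s2); split.
- by move=> j y; apply: Ha.
- rewrite /satT sat_restrict; last exact: (proj1 Hth).
  exists (catT (h \o b) a); split=> // j; by rewrite asgE catT_cat_map.
Qed.

Lemma part3a k m (th : formula) :
  complete_formula T (k + m) th -> extendible T k m th ->
  forall i : 'I_m, ~ pseudo_algebraic T k (restrict (@zxi_map k m i) th).
Proof.
move=> Hth [M [N [h [[cM cN aM aN eh] [b [a [Ha Hs]]]]]]] i PA.
have Hc := proj1 Hth.
pose rho := restrict (@zxi_map k m i) th.
have HN : satT rho (catT (h \o b) (fun _ : 'I_1 => a i)).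
  rewrite /satT sat_restrict //; exists (catT (h \o b) a); split=> // j.
  by rewrite asgE catT_zxi.
have HM : exists c : 'I_1 -> M, satT rho (catT b c).
  have H1 : sat (h \o asg b) (Ex k rho).
    exists (a i); move: HN; rewrite /satT; apply: restrict_ext => // j.
    rewrite asgE -upd_asg_catT /upd; case: (nat_of_ord j =P k) => // Hne.
    have Hj : j < k by have := ltn_ord j; lia.
    by rewrite /= !(asg_lt _ Hj).
  case/(eh (Ex k rho) (asg b)): H1 => x Hx; exists (fun _ => x).
  move: Hx; rewrite /satT; apply: restrict_ext => // j; by rewrite upd_asg_catT asgE.
case: (proj1 (PA M cM aM b HM N h aN eh (ex_intro _ (a i) (Ha i)) (fun _ => a i)) HN).
move=> c0 [Hc0 _]; apply: (Ha i (c0 ord0)).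
by have := f_equal (fun F => F ord0) Hc0.
Qed.
End Sem.

Section Enc.
Variables (F R : countType).

Fixpoint t2tree (t : term F) : GenTree.tree (nat + F) :=
  match t with
  | Var i => GenTree.Leaf (inl i)
  | App f ts => GenTree.Node 0 (GenTree.Leaf (inr f) :: map t2tree ts)
  end.

Fixpoint tree2t (x : GenTree.tree (nat + F)) : term F :=
  match x with
  | GenTree.Leaf (inl i) => Var i
  | GenTree.Node _ (GenTree.Leaf (inr f) :: ts) => App f (map tree2t ts)
  | _ => Var 0
  end.

Lemma t2treeK : cancel t2tree tree2t.
Proof.
elim/term_ind' => [i|f ts IH] //=; congr App.
elim: ts IH => //= t ts IHts IH; inversion IH; subst; congr cons; auto.
Qed.
End Enc.

HB.instance Definition _ (F : countType) := Countable.copy (term F) (can_type (@t2treeK F)).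

Section Enc2.
Variables (F R : countType).
Definition lf (t : term F) : GenTree.tree (term F + R + nat) := GenTree.Leaf (inl (inl t)).
Definition unlf (x : GenTree.tree (term F + R + nat)) : term F :=
  match x with GenTree.Leaf (inl (inl t)) => t | _ => Var 0 end.

Fixpoint f2tree (p : formula F R) : GenTree.tree (term F + R + nat) :=
  match p with
  | Eq t1 t2 => GenTree.Node 0 [:: lf t1; lf t2]
  | Rel r ts => GenTree.Node 1 (GenTree.Leaf (inl (inr r)) :: map lf ts)
  | Neg p => GenTree.Node 2 [:: f2tree p]
  | And p q => GenTree.Node 3 [:: f2tree p; f2tree q]
  | Ex i p => GenTree.Node 4 [:: GenTree.Leaf (inr i); f2tree p]
  end.

Fixpoint tree2f (x : GenTree.tree (term F + R + nat)) : formula F R :=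
  match x with
  | GenTree.Node 0 [:: a; b] => Eq (unlf a) (unlf b)
  | GenTree.Node 1 (GenTree.Leaf (inl (inr r)) :: ts) => Rel r (map unlf ts)
  | GenTree.Node 2 [:: p] => Neg (tree2f p)
  | GenTree.Node 3 [:: p; q] => And (tree2f p) (tree2f q)
  | GenTree.Node 4 [:: GenTree.Leaf (inr i); p] => Ex i (tree2f p)
  | _ => Eq (Var 0) (Var 0)
  end.

Lemma f2treeK : cancel f2tree tree2f.
Proof.
elim=> [t1 t2|r ts|p IH|p IHp q IHq|i p IH] //=; try by rewrite ?IH ?IHp ?IHq.
by rewrite -map_comp map_id_in.
Qed.
End Enc2.

HB.instance Definition _ (F R : countType) :=
  Countable.copy (formula F R) (can_type (@f2treeK F R)).

Section LS.
Variables (F R : countType) (U : structure F R) (S : nat -> U).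
Local Notation formula := (formula F R).
Definition Req := (nat + ((F * seq nat) + (formula * nat * seq nat)))%type.

Definition wit (phi : formula) (i : nat) (w : nat -> U) : U :=
  epsilon (inhabits (elt0 U)) (fun x => sat (upd w i x) phi).

Definition lst (l : seq U) : nat -> U := fun t => nth (elt0 U) l t.

Fixpoint lev (n : nat) : nat -> U :=
  match n with
  | 0 => fun j => if j is j'.+1 then S j' else elt0 U
  | n'.+1 => fun j =>
     match (@unpickle Req j) with
     | Some (inl k) => lev n' k
     | Some (inr (inl (f, L))) => funS f (map (lev n') L)
     | Some (inr (inr (phi, i, L))) => wit phi i (lst (map (lev n') L))
     | None => elt0 U
     end
  end.

Definition inC (x : U) := exists n j, lev n j = x.

Lemma lev_S n (r : Req) : lev n.+1 (pickle r) =
     match r with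
     | inl k => lev n k
     | inr (inl (f, L)) => funS f (map (lev n) L)
     | inr (inr (phi, i, L)) => wit phi i (lst (map (lev n) L))
     end.
Proof. by rewrite [LHS]/= pickleK. Qed.

Lemma lev_lift n d j : exists j', lev (n + d) j' = lev n j.
Proof.
elim: d => [|d [j' IH]]; first by exists j; rewrite addn0.
exists (pickle (inl j' : Req)); by rewrite addnS lev_S.
Qed.

Lemma lev_lift_list n d L : exists L', map (lev (n + d)) L' = map (lev n) L.
Proof.
elim: L => [|j L [L' IH]]; first by exists [::].
case: (lev_lift n d j) => j' Hj; exists (j' :: L'); by rewrite /= Hj IH.
Qed.

Lemma inC_list (l : seq U) : (forall x, List.In x l -> inC x) -> exists n L, map (lev n) L = l.
Proof.
elim: l => [|x l IH] H; first by exists 0, [::].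
case: (H x (or_introl erefl)) => n1 [j1 Hj1].
case: IH => [y Hy|n2 [L2 HL2]]; first by apply: H; right.
case: (lev_lift n1 n2 j1) => j' Hj'.
case: (lev_lift_list n2 n1 L2) => L' HL'.
exists (n1 + n2), (j' :: L'); rewrite /= Hj' Hj1; congr cons; by rewrite addnC HL' HL2.
Qed.

Definition C := {x : U | inC x}.

Lemma sval_inj : injective (@proj1_sig U inC).
Proof. move=> [x Hx] [y Hy] /= E; subst y; f_equal; apply: proof_irrelevance. Qed.

Lemma elt0_in : inC (elt0 U).
Proof. by exists 0, 0. Qed.

Lemma In_sval (xs : seq C) x : List.In x (map (@proj1_sig U inC) xs) -> inC x.
Proof. elim: xs => //= y ys IH [<-|H]; [exact: (proj2_sig y)|exact: IH]. Qed.

Lemma funS_in f (xs : seq C) : inC (funS f (map (@proj1_sig U inC) xs)).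
Proof.
case: (@inC_list (map (@proj1_sig U inC) xs)); first exact: In_sval.
move=> n [L HL]; exists n.+1, (pickle (inr (inl (f, L)) : Req)).
by rewrite lev_S HL.
Qed.

Definition M0 : structure F R :=
  {| carrier := C;
     elt0 := exist _ (elt0 U) elt0_in;
     funS := fun f xs => exist _ _ (funS_in f xs);
     relS := fun r xs => relS r (map (@proj1_sig U inC) xs) |}.

Definition g0 : M0 -> U := @proj1_sig U inC.

Lemma M0_countable : countable M0.
Proof.
pose cd (x : M0) := pickle (epsilon (inhabits (0, 0)) (fun nj : nat * nat => lev nj.1 nj.2 = g0 x)).
have Hcd (x : M0) : lev (epsilon (inhabits (0, 0)) (fun nj : nat * nat => lev nj.1 nj.2 = g0 x)).1
   (epsilon (inhabits (0, 0)) (fun nj : nat * nat => lev nj.1 nj.2 = g0 x)).2 = g0 x.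
  apply: (epsilon_spec (inhabits (0, 0)) (fun nj : nat * nat => lev nj.1 nj.2 = g0 x)).
  case: (proj2_sig x) => n [j Hj]; by exists (n, j).
exists cd => x y /(pcan_inj pickleK) E; apply: sval_inj; change (g0 x = g0 y); by rewrite -(Hcd x) -(Hcd y) E.
Qed.

Lemma eval_g0 (v : nat -> M0) t : g0 (eval v t) = eval (g0 \o v) t.
Proof.
elim/term_ind': t => [i|f ts IH] //=.
congr (funS _ _); rewrite -map_comp; apply: map_ext_In => t Ht.
by rewrite List.Forall_forall in IH; apply: IH.
Qed.

Lemma g0_elem : elementary g0.
Proof.
move=> phi; elim: phi => [t1 t2|r ts|p IH|p IHp q IHq|i p IH] v /=.
- rewrite -!eval_g0; split=> [->|] //; exact: sval_inj.
- by rewrite -map_comp (@map_ext_In _ _ _ (eval (g0 \o v))) // => t _ /=; exact: eval_g0.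
- by rewrite IH.
- by rewrite IHp IHq.
- have E (x : M0) : g0 \o upd v i x = upd (g0 \o v) i (g0 x).
    by apply: functional_extensionality => j; rewrite /upd /=; case: eqP.
  split.
  + by case=> x Hx; exists (g0 x); rewrite -E -IH.
  + case=> x Hx.
    case: (fbound p) => N0 HN0.
    pose l := [seq g0 (v t) | t <- iota 0 N0].
    case: (@inC_list l) => [y Hy|n [L HL]].
      by case: (In_map_inv Hy) => t [_ ->]; exact: (proj2_sig (v t)).
    pose w := lst (map (lev n) L).
    have Hw t : t < N0 -> w t = g0 (v t).
      by move=> Ht; rewrite /w /lst HL /l (nth_map 0) ?size_iota // nth_iota.
    have Hx' : sat (upd w i (wit p i w)) p.
      apply: (epsilon_spec (inhabits (elt0 U)) (fun x => sat (upd w i x) p)).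
      exists x; move: Hx; apply: sat_ext_imp => t /HN0 Ht; rewrite /upd; case: eqP => //.
      by rewrite Hw.
    have Hin : inC (wit p i w).
      by exists n.+1, (pickle (inr (inr (p, i, L)) : Req)); rewrite lev_S.
    exists (exist _ _ Hin); rewrite IH E /=.
    move: Hx'; apply: sat_ext_imp => t /HN0 Ht; rewrite /upd; case: eqP => //.
    by rewrite Hw.
Qed.

Lemma g0_S j : exists x : M0, g0 x = S j.
Proof. have H : inC (S j) by exists 0, j.+1. by exists (exist _ _ H). Qed.
End LS.

Lemma LS (F R : countType) (U : structure F R) (S : nat -> U) :
  exists (M : structure F R) (g : M -> U),
    countable M /\ elementary g /\ forall j, exists x, g x = S j.
Proof. exists (M0 S), (@g0 _ _ U S); split; [exact: M0_countable|split; [exact: g0_elem|exact: g0_S]]. Qed.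

Section P3.
Variables (F R : countType) (T : formula F R -> Prop).
Local Notation formula := (formula F R).
Local Notation structure := (structure F R).

Lemma catT_comp (P Q : Type) (h : P -> Q) k m (b : 'I_k -> P) (a : 'I_m -> P) :
  h \o catT b a = catT (h \o b) (h \o a).
Proof. apply: functional_extensionality => j; rewrite /catT /=; by case: (split j). Qed.

Lemma nPA_ext k m (th : formula) (i : 'I_m) :
  complete_formula T (k + m) th ->
  ~ pseudo_algebraic T k (restrict (@zxi_map k m i) th) ->
  extendible T k 1 (restrict (@zxi_map k m i) th).
Proof.
move=> Hth HPA; apply: NNPP => Hne; apply: HPA.
have Hc := proj1 Hth.
move=> M cM aM b Hex N h aN eh Hproper c; split; last first.
  case=> c0 [Hc0 Hs]; rewrite -Hc0 -catT_comp.
  by apply/(elem_restrict _ _ eh Hc).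
move=> Hs; apply: NNPP => Hno.
have Hcn : forall z, h z <> c ord0.
  move=> z Hz; apply: Hno; exists (fun _ => z); split.
    by apply: functional_extensionality => j; rewrite ord1 /= Hz.
  apply/(elem_restrict _ _ eh Hc); rewrite catT_comp.
  have -> : h \o (fun _ : 'I_1 => z) = c
    by apply: functional_extensionality => j; rewrite ord1 /= Hz.
  exact: Hs.
case: cM => code codeI.
pose E (j : nat) : M := epsilon (inhabits (elt0 M)) (fun x => code x = j).
have EK x : E (code x) = x.
  by apply: codeI; apply: (epsilon_spec (inhabits (elt0 M)) (fun x0 => code x0 = code x)); exists x.
pose S (j : nat) : N := if j is j'.+1 then h (E j') else c ord0.
case: (LS S) => N' [g [cN' [eg HS]]].
pose h' (x : M) : N' := epsilon (inhabits (elt0 N')) (fun x' => g x' = h x).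
have Hh' x : g (h' x) = h x.
  apply: (epsilon_spec (inhabits (elt0 N')) (fun x' => g x' = h x)).
  by case: (HS (code x).+1) => y Hy; exists y; rewrite Hy /S EK.
pose c' (_ : 'I_1) : N' := epsilon (inhabits (elt0 N')) (fun x' => g x' = c ord0).
have Hc' j : g (c' j) = c ord0.
  apply: (epsilon_spec (inhabits (elt0 N')) (fun x' => g x' = c ord0)).
  by case: (HS 0) => y Hy; exists y.
have gh : g \o h' = h by apply: functional_extensionality => x; exact: Hh'.
apply: Hne; exists M, N', h'; split.
  split=> //; first by exists code.
  - exact: atomic_pull eg aN.
  - by move=> phi v; rewrite (eh phi v) (eg phi (h' \o v)) compA gh.
exists b, c'; split.
  by move=> j y Hy; apply: (Hcn y); rewrite -Hh' Hy Hc'.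
apply/(elem_restrict _ _ eg Hc); rewrite catT_comp compA gh.
have -> : g \o c' = c by apply: functional_extensionality => j; rewrite ord1 /= Hc'.
exact: Hs.
Qed.

Definition Pj k m (th : formula) (j : nat) :=
  exists (M N : structure) (h : M -> N) (b : 'I_k -> M) (a : 'I_m -> N),
    [/\ countable M, countable N, atomic T M, atomic T N & elementary h] /\
    satT th (catT (h \o b) a) /\ forall i : 'I_m, i < j -> forall y, h y <> a i.

Lemma P0 k m (th : formula) :
  complete_theory T -> (exists U : structure, atomic T U /\ ~ countable U) ->
  complete_formula T (k + m) th -> Pj k m th 0.
Proof.
move=> [_ [_ HT]] [U [aU _]] Hth.
have Hc := proj1 Hth.
case: (LS (fun _ : nat => elt0 U)) => M0 [g [cM0 [eg _]]].
have aM0 := atomic_pull eg aU.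
pose sig := foldr (@Ex F R) th (iota 0 (k + m)).
have Hsig : sentence sig.
  move=> i /ffree_exs [/Hc Hi H]; move/orP: H; lia.
case: (proj1 (proj2 Hth)) => M' [a' [HM' Ha']].
case: (HT sig Hsig) => H; last first.
  exfalso; apply: (H M' (asg a') HM'); apply/sat_exs; exists (asg a'); split=> //.
have := H M0 (fun _ => elt0 M0) (proj1 aM0); case/sat_exs => w [_ Hw].
pose y0 (j : 'I_(k + m)) := w j.
have Hy0 : satT th y0.
  move: Hw; rewrite /satT; apply: sat_ext_imp => i /Hc Hi; by rewrite (asg_lt _ Hi).
exists M0, M0, id, (fun j => y0 (lshift m j)), (fun j => y0 (rshift k j)); split=> //.
split=> //.
have -> : catT (id \o (fun j => y0 (lshift m j))) (fun j => y0 (rshift k j)) = y0; last by [].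
apply: functional_extensionality => j; rewrite -(splitK j); case: (split j) => j' /=.
- by rewrite catT_l.
- by rewrite catT_r.
Qed.

Lemma Pstep k m (th : formula) j (Hj : j < m) :
  complete_formula T (k + m) th ->
  ~ pseudo_algebraic T k (restrict (@zxi_map k m (Ordinal Hj)) th) ->
  Pj k m th j -> Pj k m th j.+1.
Proof.
move=> Hth HPA [M [N [h [b [a [[cM cN aM aN eh] [Hs Hav]]]]]]].
have Hc := proj1 Hth.
pose i0 := Ordinal Hj.
have Hi0 (i : 'I_m) : i < j.+1 -> ~~ (i < j) -> i = i0.
  by move=> H1 H2; apply: val_inj => /=; apply/eqP; rewrite eqn_leq -ltnS H1 leqNgt.
case: (classic (exists e, h e = a i0)); last first.
  move=> Hne; exists M, N, h, b, a; split=> //; split=> // i Hi y Hy.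
  case: (boolP (i < j)) => Hij; first exact: (Hav i Hij y Hy).
  by apply: Hne; exists y; rewrite Hy (Hi0 i Hi Hij).
case=> e He.
have [M1 [N1 [h1 [[cM1 cN1 aM1 aN1 eh1] [b1 [c1 [Hc1 Hs1]]]]]]] := nPA_ext Hth HPA.
pose rho := restrict (@zxi_map k m i0) th.
have HN : satT rho (catT (h \o b) (fun _ : 'I_1 => a i0)).
  rewrite /satT sat_restrict //; exists (catT (h \o b) a); split=> // jj.
  by rewrite asgE catT_zxi.
have HM : satT rho (catT b (fun _ : 'I_1 => e)).
  apply/(elem_restrict _ _ eh Hc); rewrite catT_comp.
  have -> : h \o (fun _ : 'I_1 => e) = (fun _ : 'I_1 => a i0)
    by apply: functional_extensionality => jj; rewrite /= He.
  exact: HN.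
move: HM; rewrite /satT sat_restrict // => -[yM [HyM HthM]].
move: Hs1; rewrite /satT sat_restrict // => -[y1 [Hy1 Hth1]].
have [f [ef Hf]] := EXT Hth cN1 aN1 (proj1 aM) Hth1 HthM.
have Hb1 j' : f (h1 (b1 j')) = b j'.
  have := Hf (zxi_map i0 (lshift 1 j')); rewrite Hy1 HyM !asgE !catT_l //.
have Hce : f (c1 ord0) = e.
  have := Hf (zxi_map i0 (rshift k ord0)); rewrite Hy1 HyM !asgE !catT_r //.
exists M1, N, (h \o f \o h1), b1, a; split.
  split=> //; do 2 apply: elem_comp => //.
split.
  have -> : catT ((h \o f \o h1) \o b1) a = catT (h \o b) a; last by [].
  apply: functional_extensionality => jj; rewrite -(splitK jj); case: (split jj) => j' /=.
  - by rewrite !catT_l /= Hb1.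
  - by rewrite !catT_r.
move=> i Hi y /= Hy.
case: (boolP (i < j)) => Hij.
  by apply: (Hav i Hij (f (h1 y))).
move: Hy; rewrite (Hi0 i Hi Hij) -He => /(elem_inj eh) Hfy.
apply: (Hc1 ord0 y); apply: (elem_inj ef); by rewrite Hfy Hce.
Qed.

Lemma part3b k m (th : formula) :
  complete_theory T -> (exists U : structure, atomic T U /\ ~ countable U) ->
  complete_formula T (k + m) th ->
  (forall i : 'I_m, ~ pseudo_algebraic T k (restrict (@zxi_map k m i) th)) ->
  extendible T k m th.
Proof.
move=> HT HU Hth HPA.
have HP : forall j, j <= m -> Pj k m th j.
  elim=> [|j IH] Hj; first exact: P0.
  exact: (Pstep Hth (HPA (Ordinal Hj)) (IH (ltnW Hj))).
have [M [N [h [b [a [[cM cN aM aN eh] [Hs Hav]]]]]]] := HP m (leqnn m).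
exists M, N, h; split=> //; exists b, a; split=> // j y; exact: (Hav j (ltn_ord j) y).
Qed.
End P3.

Theorem fact3p2p3 (F R : countType) (T : formula F R -> Prop) :
  complete_theory T ->
  (exists M : structure F R, atomic T M /\ ~ countable M) ->
  (* (1) *)
  (forall (k m : nat) (theta : formula F R),
     complete_formula T (k + m) theta -> extendible T k m theta ->
     forall (M : structure F R), countable M -> atomic T M ->
     forall (b : 'I_k -> M) (a : 'I_m -> M),
       satT theta (catT b a) ->
       exists (M0 : structure F R) (h : M0 -> M),
         elementary h /\
         (forall j : 'I_k, exists y : M0, h y = b j) /\
         (forall (j : 'I_m) (y : M0), h y <> a j)) /\
  (* (2) *)
  (forall (k m k' m' : nat) (theta : formula F R)
          (s1 : 'I_k' -> 'I_k) (s2 : 'I_m' -> 'I_m),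
     complete_formula T (k + m) theta -> extendible T k m theta ->
     subseq_map s1 -> subseq_map s2 ->
     extendible T k' m' (restrict (cat_map s1 s2) theta)) /\
  (* (3) *)
  (forall (k m : nat) (theta : formula F R),
     complete_formula T (k + m) theta ->
     (extendible T k m theta <->
      forall i : 'I_m,
        ~ pseudo_algebraic T k (restrict (@zxi_map k m i) theta))).
Proof.
move=> HT HU; split; first exact: part1.
split; first by move=> k m k' m' th s1 s2 Hth Hext _ _; exact: part2.
move=> k m th Hth; split; first exact: part3a.
exact: part3b.
Qed.
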